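(* In the setting of the context (battery capacity $c$, nonnegative i.i.d. energy arrivals distributed as $X$, increasing concave reward $r$ with continuous derivative $r'$, and $r'(\underline{x})>r'(\overline{x})$), let $$c^*\triangleq\max\{c\ge 0:\ r'(c)\ge \mathbb{E}[r'(X)\mathbf{1}\{X<c\}]\},$$ the largest battery capacity for which the greedy policy is throughput-optimal. For $c\in(\underline{x},\overline{x})$ and $\rho\in(0,1)$ let $\overline{\xi}(\rho)\triangleq\min\{\frac{\mu-(1-\rho)c}{\rho},c\}$ and define $$\underline{\chi}(c)\triangleq\begin{cases}\inf_{\rho\in\left(0,\frac{\overline{x}-\mu}{\overline{x}-c}\right)}\rho\,\underline{r'}_{[\underline{x},c]}(\overline{\xi}(\rho)), & c\in(\underline{x},\mu],\\[2pt] \inf_{\rho\in\left(\frac{c-\mu}{c-\underline{x}},1\right)}\rho\,\underline{r'}_{[\underline{x},c]}(\overline{\xi}(\rho)), & c\in(\mu,\overline{x}).\end{cases}$$ Then $$c^*\le \overline{\overline{c}}\triangleq\sup\{c\in(\underline{x},\overline{x}):\ r'(c)\ge\underline{\chi}(c)\}.$$ In particular, for $r(x)=\frac12\log(1+x)$, $$\overline{\overline{c}}=\begin{cases}\min\{c_1,\overline{x}\}, & \mu\le\frac32\underline{x}+\frac12,\\ \min\{c_2,\overline{x}\}, & \mu>\frac32\underline{x}+\frac12,\end{cases}$$ where $c_1\triangleq\frac{\mu+\underline{x}+\sqrt{(\mu+\underline{x})^2-4(\underline{x}^2+\underline{x}-\mu)}}{2}$ and $c_2\triangleq\frac43\mu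+\frac13$.
   Context: Setting: $X_1,X_2,\dots$ are i.i.d. copies of a nonnegative random variable $X$; a policy chooses $G_t=f_t(X_1,\dots,X_t)$; battery $B_t=\min\{B_{t-1}-G_{t-1}+X_t,c\}$ with $B_0=G_0=0$; admissibility means $G_t\le B_t$; throughput is $\liminf_n\frac1n\mathbb{E}[\sum_{t\le n}r(G_t)]$; the greedy policy is $G_t=B_t$. The reward $r:[0,\infty)\to[0,\infty)$ is monotonically increasing and concave with continuous derivative $r'$. Notation: $\rho(x)\triangleq\mathbb{P}(X<x)$, $\underline{x}\triangleq\max\{x\ge0:\rho(x)=0\}$, $\overline{x}\triangleq\inf\{x\ge0:\rho(x)=1\}$ (possibly $+\infty$, in which case expressions involving $\overline{x}$ are understood as their limits as $\overline{x}\to\infty$), $r'(\infty)\triangleq\lim_{x\to\infty}r'(x)$, $\mu\triangleq\mathbb{E}[X]$. For $c>\underline{x}$, $\underline{r'}_{[\underline{x},c]}$ denotes the lower convex envelope (largest convex minorant) of $r'$ restricted to $[\underline{x},c]$. Logarithms are natural. *)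

(* Defs.v *)
From HB Require Import structures.
From mathcomp Require Import all_boot all_order all_algebra.
From mathcomp Require Import all_classical all_reals all_analysis.
Set Implicit Arguments. Unset Strict Implicit. Unset Printing Implicit Defensive.
Import Order.TTheory GRing.Theory Num.Theory.
Import numFieldNormedType.Exports.
Local Open Scope classical_set_scope.
Local Open Scope ring_scope.

Definition rhoX (d : measure_display) (T : measurableType d) (R : realType)
  (P : probability T R) (X : T -> R) (x : R) : \bar R :=
  P [set t | X t < x].

(* underline x = max {x >= 0 : rho(x) = 0}  (the max is attained) *)
Definition xlow (d : measure_display) (T : measurableType d) (R : realType)
  (P : probability T R) (X : T -> R) : R :=
  sup [set x : R | 0 <= x /\ rhoX P X x = 0%E].

Definition xup (d : measure_display) (T : measurableType d) (R : realType)
  (P : probability T R) (X : T -> R) : \bar R :=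
  ereal_inf [set x%:E | x in [set x : R | 0 <= x /\ rhoX P X x = 1%E]].

Definition meanX (d : measure_display) (T : measurableType d) (R : realType)
  (P : probability T R) (X : T -> R) : R :=
  fine (\int[P]_t (X t)%:E)%E.

Definition rp_ext (R : realType) (rp : R -> R) (y : \bar R) : R :=
  match y with
  | EFin a => rp a
  | +oo%E => lim (rp x @[x --> +oo])
  | -oo%E => rp 0
  end.

Definition convex_on (R : realType) (g : R -> R) (a b : R) : Prop :=
  forall x y t, a <= x <= b -> a <= y <= b -> 0 <= t <= 1 ->
    g (t * x + (1 - t) * y) <= t * g x + (1 - t) * g y.

Definition lconv_env (R : realType) (f : R -> R) (a b : R) (y : R) : R :=
  sup [set g y | g in [set g : R -> R |
         convex_on g a b /\ forall z, a <= z <= b -> g z <= f z]].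

Definition xi_bar (R : realType) (mu c rho : R) : R :=
  Num.min ((mu - (1 - rho) * c) / rho) c.

(* (overline x - mu)/(overline x - c), understood as its limit 1 when overline x = +oo *)
Definition rho_upper (R : realType) (xu : \bar R) (mu c : R) : R :=
  match xu with
  | EFin b => (b - mu) / (b - c)
  | _ => 1
  end.

Definition chi_lower (d : measure_display) (T : measurableType d) (R : realType)
  (P : probability T R) (X : T -> R) (rp : R -> R) (c : R) : R :=
  let mu := meanX P X in
  let a := xlow P X in
  if c <= mu then
    inf [set rho * lconv_env rp a c (xi_bar mu c rho) |
           rho in [set rho : R | 0 < rho < rho_upper (xup P X) mu c]]
  else
    inf [set rho * lconv_env rp a c (xi_bar mu c rho) |
           rho in [set rho : R | (c - mu) / (c - a) < rho < 1]].

Definition cbarbar (d : measure_display) (T : measurableType d) (R : realType)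
  (P : probability T R) (X : T -> R) (rp : R -> R) : \bar R :=
  ereal_sup [set c%:E | c in [set c : R |
     xlow P X < c /\ (c%:E < xup P X)%E /\ chi_lower P X rp c <= rp c]].

(* Main.v *)
Require Import Defs.
From HB Require Import structures.
From mathcomp Require Import all_boot all_order all_algebra.
From mathcomp Require Import all_classical all_reals all_analysis.
From mathcomp Require Import ring lra.
Set Implicit Arguments. Unset Strict Implicit. Unset Printing Implicit Defensive.
Import Order.TTheory GRing.Theory Num.Theory.
Import numFieldNormedType.Exports.
Local Open Scope classical_set_scope.
Local Open Scope ring_scope.
Section CV.
Context (R : realType).

Lemma three_slope (g : R -> R) a c u xi v :
  convex_on g a c -> a <= u -> u < xi -> xi < v -> v <= c ->
  (g xi - g u) / (xi - u) <= (g v - g xi) / (v - xi).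
Proof.
move=> cg au uxi xiv vc.
have vu : 0 < v - u by rewrite subr_gt0 (lt_trans uxi).
have xu : 0 < xi - u by rewrite subr_gt0.
have vx : 0 < v - xi by rewrite subr_gt0.
set t := (v - xi) / (v - u).
have t01 : 0 <= t <= 1.
  apply/andP; split; first by rewrite divr_ge0 // ltW.
  by rewrite ler_pdivrMr // mul1r lerD2l lerN2 ltW.
have Hu : a <= u <= c by rewrite au /= (le_trans (ltW uxi)) // (le_trans (ltW xiv)).
have Hv : a <= v <= c by rewrite vc andbT (le_trans au) // ltW // (lt_trans uxi).
have := cg u v t Hu Hv t01.
have -> : t * u + (1 - t) * v = xi by rewrite /t; field; rewrite gt_eqF.
move=> H.
rewrite ler_pdivrMr // mulrAC ler_pdivlMr //.
have e1 : 1 - t = (xi - u) / (v - u) by rewrite /t; field; rewrite gt_eqF.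
rewrite e1 /t in H.
move: H; set p := (v - xi) / (v - u); set q := (xi - u) / (v - u) => H.
have hp : v - xi = p * (v - u) by rewrite /p; field; rewrite gt_eqF.
have hq : xi - u = q * (v - u) by rewrite /q; field; rewrite gt_eqF.
rewrite hp hq.
have pq : p + q = 1 by rewrite /p /q; field; rewrite gt_eqF.
have : (g xi - g u) * p <= (g v - g xi) * q by nra.
move=> H2; nra.
Qed.

Lemma convex_support (g : R -> R) a c xi :
  convex_on g a c -> a < xi -> xi < c ->
  exists s, forall x, a <= x <= c -> g xi + s * (x - xi) <= g x.
Proof.
move=> cg axi xic.
set S := [set (g xi - g x) / (xi - x) | x in [set x | a <= x < xi]].
have S0 : S !=set0 by exists ((g xi - g a) / (xi - a)); exists a => //=; rewrite lexx axi.
have Sub : ubound S ((g c - g xi) / (c - xi)).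
  move=> z [x /andP[ax xxi] <-]; exact: three_slope cg ax xxi xic (lexx c).
have hS : has_ubound S by exists ((g c - g xi) / (c - xi)).
exists (sup S) => x /andP[ax xc].
have [xxi|xix|->] := ltgtP x xi; last by rewrite subrr mulr0 addr0.
- have xS : S ((g xi - g x) / (xi - x)) by exists x => //=; rewrite ax xxi.
  have := ub_le_sup hS xS.
  have d0 : 0 < xi - x by rewrite subr_gt0.
  rewrite ler_pdivrMr //.
  move=> H; nra.
- have d0 : 0 < x - xi by rewrite subr_gt0.
  have : sup S <= (g x - g xi) / (x - xi).
    apply: ge_sup S0 _ => z [u /andP[au uxi] <-].
    exact: three_slope cg au uxi xix xc.
  rewrite ler_pdivlMr // => H; nra.
Qed.
End CV.
Section PR.
Context (R : realType) (d : measure_display) (T : measurableType d)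
  (P : probability T R) (X : T -> R) (r rp : R -> R).
Hypothesis Hrinc : forall x y : R, 0 <= x -> x <= y -> r x <= r y.
Hypothesis Hrconc : forall x y t : R, 0 <= x -> 0 <= y -> 0 <= t <= 1 ->
     t * r x + (1 - t) * r y <= r (t * x + (1 - t) * y).
Hypothesis Hder : forall x : R, 0 < x -> is_derive x 1 r (rp x).
Hypothesis Hder0 : ((h : R)^-1 * (r h - r 0)) @[h --> (0:R)^'+] --> rp 0.
Hypothesis Hcont : {within [set x : R | 0 <= x], continuous rp}.
Hypothesis Hstrict : rp_ext rp (xup P X) < rp (xlow P X).
Hypothesis HmX : measurable_fun setT X.
Hypothesis HX0 : forall t, 0 <= X t.
Hypothesis HiX : P.-integrable setT (EFin \o X).

Local Notation RI := (Rintegral P).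
Lemma dnbhs_right (f : R -> R) (l x : R) : f z @[z --> x^'] --> l -> f z @[z --> x^'+] --> l.
Proof.
move=> H; apply: cvg_trans H; apply: cvg_app.
move=> A /=; rewrite /dnbhs /within /=.
move=> [e e0 He]; exists e => // y Hy Hy0; apply: He => //.
by rewrite gt_eqF.
Qed.

Lemma dnbhs_left (f : R -> R) (l x : R) : f z @[z --> x^'] --> l -> f z @[z --> x^'-] --> l.
Proof.
move=> H; apply: cvg_trans H; apply: cvg_app.
move=> A /=; rewrite /dnbhs /within /=.
move=> [e e0 He]; exists e => // y Hy Hy0; apply: He => //.
by rewrite lt_eqF.
Qed.

Lemma der_dnbhs x : 0 < x -> (fun h => h^-1 * (r (h + x) - r x)) @ (0:R)^' --> rp x.
Proof.
move=> x0; have [dr dv] := Hder x0.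
have E : (fun h => h^-1 * (r (h + x) - r x)) =
  (fun h => h^-1 *: ((r \o shift x) (h *: 1) - r x)).
  by apply/funext => h /=; rewrite /shift /= scaler1.
rewrite E -dv; exact: dr.
Qed.

Lemma rder_right x : 0 <= x -> (fun h => h^-1 * (r (h + x) - r x)) @ (0:R)^'+ --> rp x.
Proof.
rewrite le_eqVlt => /orP[/eqP <-|x0].
  have E : (fun h => h^-1 * (r (h + 0) - r 0)) = (fun h => h^-1 * (r h - r 0)).
    by apply/funext => h; rewrite addr0.
  by rewrite E; exact: Hder0.
exact/dnbhs_right/der_dnbhs.
Qed.

Lemma slope_right x y : 0 <= x -> x < y -> (r y - r x) / (y - x) <= rp x.
Proof.
move=> x0 xy; have yx0 : 0 < y - x by rewrite subr_gt0.
apply: (cvgr_to_ge (rder_right x0)).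
near=> h.
have h0 : 0 < h by near: h; exact: nbhs_right_gt.
have hy : h < y - x by near: h; exact: nbhs_right_lt.
set t := 1 - h / (y - x).
have t01 : 0 <= t <= 1.
  apply/andP; split; rewrite /t.
    by rewrite subr_ge0 ler_pdivrMr // mul1r ltW.
  by rewrite lerBlDr lerDl divr_ge0 // ltW.
have := Hrconc x0 (le_trans x0 (ltW xy)) t01.
have -> : t * x + (1 - t) * y = h + x.
  by rewrite /t; field; rewrite gt_eqF.
move=> H.
rewrite ler_pdivlMl //.
have -> : h * ((r y - r x) / (y - x)) = (1 - t) * (r y - r x).
  by rewrite /t; field; rewrite gt_eqF.
lra.
Unshelve. all: by end_near.
Qed.

Lemma slope_left x y : 0 <= x -> x < y -> rp y <= (r y - r x) / (y - x).
Proof.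
move=> x0 xy; have yx0 : 0 < y - x by rewrite subr_gt0.
have y0 : 0 < y by apply: le_lt_trans xy.
apply: (cvgr_to_le (dnbhs_left (der_dnbhs y0))).
near=> h.
have h0 : h < 0 by near: h; exact: nbhs_left_lt.
have hy : - (y - x) < h by near: h; apply: nbhs_left_gt; rewrite oppr_lt0.
set t := - h / (y - x).
have t01 : 0 <= t <= 1.
  apply/andP; split; rewrite /t.
    by rewrite divr_ge0 // ?oppr_ge0 ltW.
  by rewrite ler_pdivrMr // mul1r lerNl ltW.
have := Hrconc x0 (le_trans x0 (ltW xy)) t01.
have -> : t * x + (1 - t) * y = h + y.
  by rewrite /t; field; rewrite gt_eqF.
move=> H.
rewrite ler_ndivrMl //.
have -> : h * ((r y - r x) / (y - x)) = - t * (r y - r x).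
  by rewrite /t; field; rewrite gt_eqF.
lra.
Unshelve. all: by end_near.
Qed.

Lemma rp_anti x y : 0 <= x -> x <= y -> rp y <= rp x.
Proof.
move=> x0; rewrite le_eqVlt => /orP[/eqP <-//|xy].
exact: le_trans (slope_left x0 xy) (slope_right x0 xy).
Qed.

Lemma rp_ge0 x : 0 <= x -> 0 <= rp x.
Proof.
move=> x0; have xy : x < x + 1 by rewrite ltrDl.
apply: le_trans (slope_right x0 xy).
apply: divr_ge0; rewrite subr_ge0 //; last exact: ltW.
by apply: Hrinc => //; exact: ltW.
Qed.

Lemma mlt c : measurable [set t | X t < c].
Proof.
have := HmX measurableT (measurable_itv `]-oo, c[).
rewrite setTI; congr measurable; apply/seteqP; split => t /=; rewrite in_itv /=; done.
Qed.

Lemma mge c : measurable [set t | c <= X t].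
Proof.
have -> : [set t | c <= X t] = ~` [set t | X t < c].
  apply/seteqP; split => t /= H; first by move=> H2; move: H; rewrite leNgt H2.
  by rewrite leNgt; apply/negP.
exact/measurableC/mlt.
Qed.

Lemma iX D : measurable D -> P.-integrable D (EFin \o X).
Proof. by move=> mD; apply: integrableS HiX. Qed.

Lemma icst D k : measurable D -> P.-integrable D (EFin \o cst k).
Proof. by move=> mD; exact: finite_measure_integrable_cst. Qed.

Lemma ibounded D (h : T -> R) M : measurable D -> measurable_fun setT h ->
  (forall t, `|h t| <= M) -> P.-integrable D (EFin \o h).
Proof.
move=> mD mh hM; apply: measurable_bounded_integrable => //.
- by rewrite (le_lt_trans (probability_le1 P mD)) // ltry.
- exact: measurable_funS mh.
- exists M; split; first exact: num_real.
  move=> x Mx t _; exact: le_trans (hM t) (ltW Mx).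
Qed.

Lemma iind D A : measurable D -> measurable A -> P.-integrable D (EFin \o \1_A).
Proof.
move=> mD mA; apply: (@ibounded _ _ 1) => //.
by move=> t; rewrite /indic; case: (_ \in _); rewrite ?normr1 ?normr0.
Qed.

Lemma RI_cst D k : measurable D -> RI D (fun _ => k) = k * fine (P D).
Proof. by move=> mD; rewrite Rintegral_cst. Qed.

Lemma RI_ind D A : measurable D -> measurable A -> RI D (\1_A) = fine (P (A `&` D)).
Proof. by move=> mD mA; rewrite /Rintegral integral_indic. Qed.

Lemma GC N D f g : measurable N -> P N = 0%E -> measurable D ->
  P.-integrable D (EFin \o f) -> P.-integrable D (EFin \o g) ->
  (forall t, D t -> ~ N t -> g t <= f t) -> RI D g <= RI D f.
Proof.
move=> mN N0 mD iF iG H.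
rewrite /Rintegral (negligible_integral mN mD iF N0) (negligible_integral mN mD iG N0).
have mDN : measurable (D `\` N) by exact: measurableD.
have iF' := integrableS mD mDN (@subDsetl _ D N) iF.
have iG' := integrableS mD mDN (@subDsetl _ D N) iG.
have := le_Rintegral mDN iG' iF'.
by apply => t [Dt Nt]; exact: H.
Qed.

Lemma Pfin A : measurable A -> P A = (fine (P A))%:E.
Proof. by move=> mA; rewrite fineK // fin_num_measure. Qed.

Lemma Pge0 A : 0 <= fine (P A).
Proof. by rewrite fine_ge0. Qed.

Lemma Ple1 A : measurable A -> fine (P A) <= 1.
Proof.
move=> mA; rewrite -lee_fin -Pfin //; exact: probability_le1.
Qed.


Lemma indicP (A : set T) t : (A t /\ \1_A t = 1 :> R) \/ (~ A t /\ \1_A t = 0 :> R).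
Proof.
case: (pselect (A t)) => H; [left|right]; split => //; rewrite indicE.
  by rewrite mem_set.
by rewrite memNset.
Qed.

Lemma iscale D f m : measurable D -> P.-integrable D (EFin \o f) ->
  P.-integrable D (EFin \o (fun t => m * f t)).
Proof.
move=> mD H; have := integrableZl mD m H.
by apply: (eq_integrable mD) => t _ /=; rewrite EFinM.
Qed.

Lemma iadd D f g : measurable D -> P.-integrable D (EFin \o f) ->
  P.-integrable D (EFin \o g) -> P.-integrable D (EFin \o (fun t => f t + g t)).
Proof.
move=> mD H1 H2; have := integrableD mD H1 H2.
by apply: (eq_integrable mD) => t _ /=; rewrite EFinD.
Qed.

Lemma RI_lin D A k m : measurable D -> measurable A ->
  RI D (fun t => k + m * \1_A t) = k * fine (P D) + m * fine (P (A `&` D)).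
Proof.
move=> mD mA; rewrite RintegralD //.
  by rewrite RI_cst // RintegralZl ?RI_ind //; exact: iind.
exact: icst.
exact: (iscale m mD (iind mD mA)).
Qed.

Lemma Pcompl c : fine (P [set t | c <= X t]) = 1 - fine (P [set t | X t < c]).
Proof.
have -> : [set t | c <= X t] = ~` [set t | X t < c].
  apply/seteqP; split => t /= H; first by move=> H2; move: H; rewrite leNgt H2.
  by rewrite leNgt; apply/negP.
rewrite probability_setC; last exact: mlt.
by rewrite (Pfin (mlt c)) -EFinB.
Qed.

Lemma PsetT : fine (P setT) = 1.
Proof. by rewrite probability_setT. Qed.

Lemma Plt_mono x y : x <= y -> fine (P [set t | X t < x]) <= fine (P [set t | X t < y]).
Proof.
move=> xy; rewrite -lee_fin -!Pfin; try exact: mlt.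
apply: le_measure; rewrite ?inE; try exact: mlt.
by move=> t /= H; exact: lt_le_trans xy.
Qed.

Lemma RI_split c f : P.-integrable setT (EFin \o f) ->
  RI setT f = RI [set t | X t < c] f + RI [set t | c <= X t] f.
Proof.
move=> iF.
have -> : (setT : set T) = [set t | X t < c] `|` [set t | c <= X t].
  apply/seteqP; split => t //= _.
  by case: (ltP (X t) c) => H; [left|right].
rewrite Rintegral_setU //; try exact: mlt; try exact: mge.
- by move: iF; apply: integrableS => //; apply: measurableU; [exact: mlt|exact: mge].
- apply/disj_setPS => t /= [H1 H2].
  by move: H2; rewrite leNgt H1.
Qed.

Local Notation a := (xlow P X).
Local Notation b := (xup P X).
Local Notation mu := (meanX P X).

Lemma mu_RI : mu = RI setT X.
Proof. by []. Qed.

Lemma rho_zero_le_mu x : 0 <= x -> rhoX P X x = 0%E -> x <= mu.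
Proof.
move=> x0 H; rewrite mu_RI.
have E : RI setT (fun t => 0 + x * \1_[set t | x <= X t] t) = x.
  rewrite RI_lin //; last exact: mge.
  rewrite setIT Pcompl /rhoX in H *.
  by rewrite H /= subr0 mulr1 mul0r add0r.
rewrite -{1}E; apply: le_Rintegral => //.
  apply: iadd => //; first exact: icst.
  exact: (iscale x measurableT (iind measurableT (mge x))).
move=> t _; rewrite add0r; case: (indicP [set t | x <= X t] t) => [[H1 ->]|[H1 ->]].
  by rewrite mulr1.
by rewrite mulr0.
Qed.

Lemma xlow_set0 : [set x : R | 0 <= x /\ rhoX P X x = 0%E] 0.
Proof.
split => //; rewrite /rhoX.
have -> : [set t | X t < 0] = set0.
  by apply/seteqP; split => t //= H; move: (HX0 t); rewrite leNgt H.
exact: measure0.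
Qed.

Lemma xlow_hub : has_sup [set x : R | 0 <= x /\ rhoX P X x = 0%E].
Proof.
split; first by exists 0; exact: xlow_set0.
by exists mu => x [x0 H]; exact: rho_zero_le_mu.
Qed.

Lemma a_ge0 : 0 <= a.
Proof. by apply: (ub_le_sup (proj2 xlow_hub)); exact: xlow_set0. Qed.

Lemma a_le_mu : a <= mu.
Proof. by apply: ge_sup; [exists 0; exact: xlow_set0|move=> x [x0 H]; exact: rho_zero_le_mu]. Qed.

Lemma above_a x : a < x -> 0 < fine (P [set t | X t < x]).
Proof.
move=> ax; rewrite lt0r Pge0 andbT; apply/negP => /eqP H.
have x0 : 0 <= x by rewrite (le_trans a_ge0) // ltW.
have : [set x : R | 0 <= x /\ rhoX P X x = 0%E] x.
  by split => //; rewrite /rhoX (Pfin (mlt x)) H.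
move/(ub_le_sup (proj2 xlow_hub)); rewrite leNgt ax //.
Qed.

Lemma P_below_a : P [set t | X t < a] = 0%E.
Proof.
have mA := mlt a.
apply/(negligibleP _ mA).
have -> : [set t | X t < a] = \bigcup_n [set t | X t < a - n.+1%:R^-1].
  apply/seteqP; split => t /=.
    move=> H; have [k Hk] := ltr_add_invr H; exists k => //=.
    by rewrite ltrBrDr.
  by move=> [n _ /= H]; apply: lt_le_trans H _; rewrite lerBlDr lerDl.
apply: negligible_bigcup => n.
apply/negligibleP; first exact: mlt.
have en : 0 < n.+1%:R^-1 :> R by rewrite invr_gt0 ltr0Sn.
have [e [e0 He] ae] := sup_adherent en xlow_hub.
apply/eqP; rewrite -measure_le0 -He.
apply: le_measure; rewrite ?inE; try exact: mlt.
by move=> t /= H; exact: lt_trans H ae.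
Qed.

Lemma b_le x : 0 <= x -> fine (P [set t | X t < x]) = 1 -> (b <= x%:E)%E.
Proof.
move=> x0 H; apply: ereal_inf_lbound; exists x => //; split => //.
by rewrite /rhoX (Pfin (mlt x)) H.
Qed.

Lemma b_ge0 : (0 <= b)%E.
Proof. by apply: le_ereal_inf_tmp => _ [x [x0 _] <-]; rewrite lee_fin. Qed.

Lemma lt_b x : 0 <= x -> (x%:E < b)%E -> fine (P [set t | X t < x]) < 1.
Proof.
move=> x0 H; rewrite lt_neqAle Ple1 ?andbT; last exact: mlt.
by apply/negP => /eqP /(b_le x0); rewrite leNgt H.
Qed.

Lemma above_b y c : b = y%:E -> y < c -> fine (P [set t | X t < c]) = 1.
Proof.
move=> by0 yc.
have : (b < c%:E)%E by rewrite by0 lte_fin.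
move/ereal_inf_lt => [_ [z [z0 Hz] <-]]; rewrite lte_fin => zc.
apply/eqP; rewrite eq_le Ple1 ?mlt //=.
have := Plt_mono (ltW zc); rewrite /rhoX in Hz; rewrite Hz /=; first by move=> H.
exact: mlt.
Qed.

Lemma b_cases : b = +oo%E \/ exists y, b = y%:E /\ 0 <= y.
Proof.
have := b_ge0; case: (xup P X) => [y| |] H.
- by right; exists y; split => //; rewrite -lee_fin.
- by left.
- by move: H; rewrite leNgt ltNy0.
Qed.

Lemma a_lt_b : (a%:E < b)%E.
Proof.
rewrite ltNge; apply/negP => H.
have [Hb|[y [Hb y0]]] := b_cases; first by move: H; rewrite Hb leNgt ltry.
move: H; rewrite Hb lee_fin => ya.
have := Hstrict; rewrite Hb /= => H.
have := rp_anti y0 ya; rewrite leNgt H //.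
Qed.

Lemma exists_above_a : exists e, 0 < e /\ 0 < fine (P [set t | a + e <= X t]).
Proof.
case: (pselect (exists e, 0 < e /\ 0 < fine (P [set t | a + e <= X t]))) => // Hn.
exfalso.
have Hb : forall e, 0 < e -> (b <= (a + e)%:E)%E.
  move=> e e0; apply: b_le; first by rewrite addr_ge0 // ?a_ge0 // ltW.
  have H0 : fine (P [set t | a + e <= X t]) = 0.
    apply/eqP; rewrite eq_le Pge0 andbT leNgt; apply/negP => H; apply: Hn; by exists e.
  by move: H0; rewrite Pcompl => /eqP; rewrite subr_eq0 => /eqP <-.
have ab := a_lt_b.
have [Hb'|[y [Hb' y0]]] := b_cases.
  by have := Hb 1 ltr01; rewrite Hb' leNgt ltry.
move: ab; rewrite Hb' lte_fin => ay.
have : y <= a.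
  apply/ler_addgt0Pr => e e0; have := Hb e e0; rewrite Hb' lee_fin; done.
by rewrite leNgt ay.
Qed.

Lemma a_lt_mu : a < mu.
Proof.
have [e [e0 q0]] := exists_above_a.
have ma := mge (a + e).
have E : RI setT (fun t => a + e * \1_[set t | a + e <= X t] t) =
   a + e * fine (P [set t | a + e <= X t]).
  by rewrite RI_lin // PsetT mulr1 setIT.
apply: (@lt_le_trans _ _ (a + e * fine (P [set t | a + e <= X t]))).
  by rewrite ltrDl mulr_gt0.
rewrite -E mu_RI.
apply: (GC (mlt a) P_below_a) => //.
- by apply: iadd => //; [exact: icst|exact: (iscale e measurableT (iind measurableT ma))].
move=> t _ /= Ht0; have Ht : a <= X t by rewrite leNgt; apply/negP.
case: (indicP [set t | a + e <= X t] t) => [[H1 ->]|[H1 ->]].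
  by rewrite mulr1.
by rewrite mulr0 addr0.
Qed.

Lemma mu_lt_b : (mu%:E < b)%E.
Proof.
have [Hb|[y [Hb y0]]] := b_cases; first by rewrite Hb ltry.
rewrite Hb lte_fin.
have := a_lt_b; rewrite Hb lte_fin => ay.
set dl := (y - a) / 2.
have dl0 : 0 < dl by rewrite divr_gt0 // subr_gt0.
have hp : 0 < fine (P [set t | X t < a + dl]) by apply: above_a; rewrite ltrDl.
set p := fine (P [set t | X t < a + dl]) in hp.
have p1 : p <= 1 by apply: Ple1; exact: mlt.
have yad : 0 < y - a - dl by rewrite /dl; lra.
have ep0 : 0 < (y - a - dl) * p / 2.
  apply: divr_gt0; last by [].
  exact: mulr_gt0.
set ep := (y - a - dl) * p / 2 in ep0 *.
have mN := mge (y + ep).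
have N0 : P [set t | y + ep <= X t] = 0%E.
  rewrite (Pfin mN) Pcompl (above_b Hb); last by rewrite ltrDl.
  by rewrite subrr.
have ml := mlt (a + dl).
have E : RI setT (fun t => (y + ep) + (- (y + ep - a - dl)) * \1_[set t | X t < a + dl] t) =
   (y + ep) + (- (y + ep - a - dl)) * p.
  by rewrite RI_lin // PsetT mulr1 setIT.
apply: (@le_lt_trans _ _ ((y + ep) + (- (y + ep - a - dl)) * p)).
  rewrite -E mu_RI.
  apply: (GC mN N0) => //.
  - by apply: iadd => //; [exact: icst|exact: (iscale _ measurableT (iind measurableT ml))].
  move=> t _ /= Ht0; have Ht : X t < y + ep by rewrite ltNge; apply/negP.
  case: (indicP [set t | X t < a + dl] t) => [[H1 ->]|[H1 ->]].
    rewrite mulr1; move: H1 => /= H1; lra.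
  by rewrite mulr0 addr0 ltW.
rewrite /ep; nra.
Qed.

Definition rpm (x : R) := rp (Num.max 0 x).

Lemma rpm_mono : {homo rpm : x y /~ x <= y}.
Proof.
move=> x y xy; rewrite /rpm; apply: rp_anti; first by rewrite le_max lexx.
by rewrite ge_max !le_max lexx xy /= orbT.
Qed.

Lemma mrpX : measurable_fun setT (fun t => rp (X t)).
Proof.
have -> : (fun t => rp (X t)) = rpm \o X.
  by apply/funext => t /=; rewrite /rpm max_r.
apply: measurableT_comp => //.
apply: measurable_realfun.nonincreasing_measurable => //.
by move=> x y xy; exact: rpm_mono.
Qed.

Lemma irp D : measurable D -> P.-integrable D (EFin \o (fun t => rp (X t))).
Proof.
move=> mD; apply: (@ibounded _ _ (rp 0)) => //; first exact: mrpX.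
move=> t; rewrite ger0_norm; last exact: rp_ge0.
exact: rp_anti.
Qed.

Definition minor (c : R) := [set g : R -> R | convex_on g a c /\ forall z, a <= z <= c -> g z <= rp z].

Lemma minor0 c : minor c (cst 0).
Proof.
split.
  by move=> x y t _ _ _ /=; rewrite mulr0 mulr0 addr0.
move=> z /andP[az _]; apply: rp_ge0; exact: le_trans a_ge0 az.
Qed.

Lemma env_ub c y : a <= y <= c -> ubound [set g y | g in minor c] (rp y).
Proof. by move=> Hy _ [g [_ Hg] <-]; exact: Hg. Qed.

Lemma env_ne c y : [set g y | g in minor c] !=set0.
Proof. by exists 0, (cst 0) => //; exact: minor0. Qed.

Lemma env_le c y : a <= y <= c -> lconv_env rp a c y <= rp y.
Proof. by move=> Hy; apply: ge_sup; [exact: env_ne|exact: env_ub]. Qed.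

Lemma env_ge0 c y : a <= y <= c -> 0 <= lconv_env rp a c y.
Proof.
move=> Hy; apply: (ub_le_sup (E := [set g y | g in minor c])).
  by exists (rp y); exact: env_ub.
by exists (cst 0) => //; exact: minor0.
Qed.

Lemma env_le_of c y v : (forall g, minor c g -> g y <= v) -> lconv_env rp a c y <= v.
Proof. by move=> H; apply: ge_sup; [exact: env_ne|move=> _ [g Hg <-]; exact: H]. Qed.

Lemma xi_eq (m c rh : R) : 0 < rh -> m < c -> xi_bar m c rh = (m - (1 - rh) * c) / rh.
Proof.
move=> r0 mc; rewrite /xi_bar; apply/min_idPl.
rewrite ler_pdivrMr //; lra.
Qed.

Lemma xi_c (m c rh : R) : 0 < rh -> c <= m -> xi_bar m c rh = c.
Proof.
move=> r0 mc; rewrite /xi_bar; apply/min_idPr.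
rewrite ler_pdivlMr //; lra.
Qed.

Lemma xi_range (a0 m c rh : R) : a0 < c -> m < c -> (c - m) / (c - a0) < rh -> rh < 1 ->
  0 < rh /\ a0 < xi_bar m c rh < c.
Proof.
move=> ac mc H1 H2.
have ca : 0 < c - a0 by rewrite subr_gt0.
have r0 : 0 < rh by apply: le_lt_trans H1; rewrite divr_ge0 // ?subr_ge0 ltW.
split => //; rewrite xi_eq //.
move: H1; rewrite ltr_pdivrMr // => H1.
apply/andP; split.
  rewrite ltr_pdivlMr //; lra.
rewrite ltr_pdivrMr //; lra.
Qed.

Lemma chi_le_int c : mu < c -> (c%:E < b)%E ->
  chi_lower P X rp c <= RI [set t | X t < c] (fun t => rp (X t)).
Proof.
move=> muc cb.
have ac : a < c := le_lt_trans a_le_mu muc.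
have c0 : 0 <= c := le_trans a_ge0 (ltW ac).
have rh1 : fine (P [set t | X t < c]) < 1 := lt_b c0 cb.
set rh := fine (P [set t | X t < c]) in rh1.
have [c' [cc' c'b]] : exists c', c < c' /\ (c'%:E < b)%E.
  have [Hb|[y [Hb _]]] := b_cases.
    by exists (c + 1); rewrite Hb ltry ltrDl.
  move: cb; rewrite Hb !lte_fin => cy; exists ((c + y) / 2); rewrite lte_fin; split; lra.
have c'0 : 0 <= c' by apply: le_trans c0 (ltW cc').
have q0 : 0 < fine (P [set t | c' <= X t]).
  by rewrite Pcompl subr_gt0; apply: lt_b.
set q := fine (P [set t | c' <= X t]) in q0.
set I1 := RI [set t | X t < c] X.
set I2 := RI [set t | c <= X t] X.
have muI : mu = I1 + I2 := RI_split c HiX.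
have mc := mge c; have mc' := mge c'; have mlc := mlt c.
have I2ge : c * (1 - rh) + (c' - c) * q <= I2.
  have E : RI [set t | c <= X t] (fun t => c + (c' - c) * \1_[set t | c' <= X t] t)
      = c * (1 - rh) + (c' - c) * q.
    rewrite RI_lin // Pcompl -/rh.
    have -> : [set t | c' <= X t] `&` [set t | c <= X t] = [set t | c' <= X t].
      apply/seteqP; split => t /=; first by case.
      by move=> H; split => //; apply: le_trans H; exact: ltW.
    by [].
  rewrite -E; apply: le_Rintegral => //.
  - by apply: iadd => //; [exact: icst|exact: (iscale _ mc (iind mc mc'))].
  - exact: iX.
  move=> t /= Ht.
  case: (indicP [set t | c' <= X t] t) => [[H1 ->]|[H1 ->]].
    by rewrite mulr1 addrC subrK.
  by rewrite mulr0 addr0.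
have I1ge : a * rh <= I1.
  have E : RI [set t | X t < c] (fun _ => a) = a * rh by exact: RI_cst.
  rewrite -E; apply: (GC (mlt a) P_below_a) => //.
  - exact: iX.
  - exact: icst.
  move=> t _ /= Ht0; rewrite leNgt; exact/negP.
have cq : 0 < (c' - c) * q by apply: mulr_gt0 => //; rewrite subr_gt0.
have rhlow : (c - mu) / (c - a) < rh.
  rewrite ltr_pdivrMr ?subr_gt0 //; nra.
have [rh0 /andP[axi xic]] := xi_range ac muc rhlow rh1.
have xiE : xi_bar mu c rh = (mu - (1 - rh) * c) / rh := xi_eq rh0 muc.
set xi := xi_bar mu c rh in axi xic xiE.
have rhxi : rh * xi = mu - (1 - rh) * c.
  by rewrite xiE mulrC divfK // gt_eqF.
have I1le : I1 <= rh * xi by rewrite rhxi; nra.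
rewrite /chi_lower /=; case: ifP => [H|_]; first by move: H; rewrite leNgt muc.
apply: (@le_trans _ _ (rh * lconv_env rp a c xi)).
  apply: ge_inf.
    exists 0 => _ [r' /andP[H1 H2] <-].
    have [r0' /andP[ax' xc']] := xi_range ac muc H1 H2.
    apply: mulr_ge0; first exact: ltW.
    by apply: env_ge0; rewrite !ltW.
  by exists rh => //; apply/andP; split.
rewrite -ler_pdivlMl //; apply: env_le_of => g [cg Hg].
rewrite ler_pdivlMl //.
have [s Hs] := convex_support cg axi xic.
set s' := Num.min s 0.
have s'0 : s' <= 0 by rewrite /s' ge_min lexx orbT.
have Hpt : forall x, a <= x < c -> g xi + s' * (x - xi) <= rp x.
  move=> x /andP[ax xc].
  have hx : a <= x <= c by rewrite ax ltW.
  case: (leP s 0) => s0.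
    have -> : s' = s by rewrite /s'; apply/min_idPl.
    exact: le_trans (Hs x hx) (Hg x hx).
  have -> : s' = 0 by rewrite /s'; apply/min_idPr; exact: ltW.
  rewrite mul0r addr0.
  have hc : a <= c <= c by rewrite lexx ltW.
  have := Hs c hc; have := Hg c hc.
  have : rp c <= rp x by apply: rp_anti; [exact: le_trans a_ge0 ax|exact: ltW].
  have : 0 <= s * (c - xi) by rewrite mulr_ge0 // ?subr_ge0 ltW.
  lra.
have E : RI [set t | X t < c] (fun t => (g xi - s' * xi) + s' * X t)
    = (g xi - s' * xi) * rh + s' * I1.
  rewrite RintegralD //; [|exact: icst|exact: (iscale _ mlc (iX mlc))].
  by rewrite RI_cst // RintegralZl //; exact: iX.
apply: (@le_trans _ _ ((g xi - s' * xi) * rh + s' * I1)).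
  nra.
rewrite -E; apply: (GC (mlt a) P_below_a) => //.
- exact: irp.
- by apply: iadd => //; [exact: icst|exact: (iscale _ mlc (iX mlc))].
move=> t /= Ht Ht0.
have aX : a <= X t by rewrite leNgt; exact/negP.
have := Hpt (X t); rewrite aX Ht /= => H.
by apply: le_trans (H isT); rewrite mulrBr addrA addrAC.
Qed.

Lemma chi_small c : a < c -> c <= mu -> chi_lower P X rp c <= rp c.
Proof.
move=> ac cmu.
have cb : (c%:E < b)%E by apply: le_lt_trans mu_lt_b; rewrite lee_fin.
have ru0 : 0 < rho_upper b mu c.
  have [Hb|[y [Hb y0]]] := b_cases; first by rewrite Hb.
  have := mu_lt_b; rewrite Hb lte_fin => muy.
  apply: divr_gt0; rewrite subr_gt0 //; lra.
set ru := rho_upper b mu c in ru0 *.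
rewrite /chi_lower /=; case: ifP => [_|H]; last by move: H; rewrite cmu.
have hc : a <= c <= c by rewrite lexx ltW.
set r0 := Num.min ru 1 / 2.
have r00 : 0 < r0 by apply: divr_gt0 => //; rewrite lt_min ru0 ltr01.
have m1 : Num.min ru 1 <= ru by rewrite ge_min lexx.
have m2 : Num.min ru 1 <= 1 by rewrite ge_min lexx orbT.
have r0u : r0 < ru by rewrite /r0 ltr_pdivrMr //; lra.
have r01 : r0 <= 1 by rewrite /r0 ler_pdivrMr //; lra.
apply: (@le_trans _ _ (r0 * lconv_env rp a c (xi_bar mu c r0))).
  apply: ge_inf.
    exists 0 => _ [r' /andP[H1 H2] <-].
    rewrite xi_c //; apply: mulr_ge0; [exact: ltW|exact: env_ge0].
  by exists r0 => //; apply/andP; split.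
rewrite xi_c //.
apply: (@le_trans _ _ (lconv_env rp a c c)); last exact: env_le.
rewrite -{2}[lconv_env _ _ _ _]mul1r; apply: ler_wpM2r => //.
exact: env_ge0.
Qed.

Definition Gset := [set c : R | xlow P X < c /\ (c%:E < xup P X)%E /\ chi_lower P X rp c <= rp c].

Lemma G_mu : Gset mu.
Proof. split; first exact: a_lt_mu. split; first exact: mu_lt_b. exact: chi_small a_lt_mu (lexx mu). Qed.

Lemma cbb_ge_mu : (mu%:E <= cbarbar P X rp)%E.
Proof. by apply: ereal_sup_ubound; exists mu => //; exact: G_mu. Qed.

Lemma int_RI D : measurable D ->
  (\int[P]_(t in D) (rp (X t))%:E)%E = (RI D (fun t => rp (X t)))%:E.
Proof. by move=> mD; rewrite /Rintegral fineK //; apply: integrable_fin_num => //; exact: irp. Qed.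

Lemma RI_sub c1 c2 : c1 <= c2 ->
  RI [set t | X t < c1] (fun t => rp (X t)) <= RI [set t | X t < c2] (fun t => rp (X t)).
Proof.
move=> c12; rewrite -lee_fin -!int_RI; try exact: mlt.
apply: ge0_subset_integral; try exact: mlt.
- by apply/measurable_realfun.measurable_EFinP; apply: measurable_funS mrpX.
- by move=> t _; rewrite lee_fin rp_ge0.
- by move=> t /= H; exact: lt_le_trans c12.
Qed.

Lemma no_above_b y c : b = y%:E -> y < c -> rp c < RI [set t | X t < c] (fun t => rp (X t)).
Proof.
move=> Hb yc.
have ay : a < y by have := a_lt_b; rewrite Hb lte_fin.
have y0 : 0 <= y := le_trans a_ge0 (ltW ay).
have hs := Hstrict; rewrite Hb /= in hs.
set ep := (rp a - rp y) / 2.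
have ep0 : 0 < ep by apply: divr_gt0 => //; rewrite subr_gt0.
have ca : rp x @[x --> within [set x : R | 0 <= x] (nbhs a)] --> rp a.
  have H := @Hcont a.
  rewrite nbhs_subspace_in //; last exact: a_ge0.
have : \forall t \near within [set x | 0 <= x] (nbhs a), rp y + ep < rp t.
  have hz : rp y + ep < rp a by rewrite /ep; lra.
  exact: (cvgr_gt _ ca _ hz).
rewrite near_withinE => /nbhs_ballP [dl /= dl0 Hdl].
set dl' := Num.min dl (c - a).
have dl'0 : 0 < dl' by rewrite lt_min dl0 subr_gt0 (lt_trans ay).
have adc : a + dl' <= c by rewrite -lerBrDl ge_min lexx orbT.
have hp : 0 < fine (P [set t | X t < a + dl']) by apply: above_a; rewrite ltrDl.
set p := fine (P [set t | X t < a + dl']) in hp.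
have ml := mlt (a + dl'); have mlc := mlt c.
have E : RI [set t | X t < c] (fun t => rp c + ep * \1_[set t | X t < a + dl'] t)
    = rp c + ep * p.
  rewrite RI_lin // (above_b Hb yc) mulr1.
  have -> : [set t | X t < a + dl'] `&` [set t | X t < c] = [set t | X t < a + dl'].
    apply/seteqP; split => t /=; first by case.
    by move=> H; split => //; apply: lt_le_trans adc.
  by [].
have rcy : rp c <= rp y by apply: rp_anti => //; exact: ltW.
apply: (@lt_le_trans _ _ (rp c + ep * p)); first by rewrite ltrDl mulr_gt0.
rewrite -E; apply: (GC (mlt a) P_below_a) => //.
- exact: irp.
- by apply: iadd => //; [exact: icst|exact: (iscale _ mlc (iind mlc ml))].
move=> t /= Ht Ht0.
have aX : a <= X t by rewrite leNgt; exact/negP.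
have X0 := HX0 t.
case: (indicP [set t | X t < a + dl'] t) => [[H1 ->]|[H1 ->]].
  rewrite mulr1.
  have : rp y + ep < rp (X t).
    apply: Hdl => //; rewrite /ball /= distrC ger0_norm ?subr_ge0 //.
    by rewrite ltrBlDl; apply: lt_le_trans H1 _; rewrite lerD2l ge_min lexx.
  lra.
rewrite mulr0 addr0; apply: rp_anti => //; exact: ltW.
Qed.

Lemma part1 c : 0 <= c ->
  (\int[P]_(t in [set t | (X t < c)%R]) (rp (X t))%:E <= (rp c)%:E)%E ->
  (c%:E <= cbarbar P X rp)%E.
Proof.
move=> c0; rewrite int_RI; last exact: mlt.
rewrite lee_fin => Hc.
have [cmu|muc] := leP c mu.
  by apply: le_trans cbb_ge_mu; rewrite lee_fin.
have [cb|bc] := ltP (c%:E) b.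
  apply: ereal_sup_ubound; exists c => //; split; first exact: lt_trans a_lt_mu muc.
  split => //.
  exact: le_trans (chi_le_int muc cb) Hc.
have [Hb|[y [Hb y0]]] := b_cases; first by move: bc; rewrite Hb leNgt ltry.
move: bc; rewrite Hb lee_fin => yc.
have [yc'|cy] := ltP y c.
  by have := no_above_b Hb yc'; rewrite ltNge Hc.
have ecy : c = y by apply/eqP; rewrite eq_le cy yc.
subst y.
have Gin : forall c', mu < c' -> c' < c -> Gset c'.
  move=> c' muc' c'c.
  have c'b : (c'%:E < b)%E by rewrite Hb lte_fin.
  split; first exact: lt_trans a_lt_mu muc'.
  split => //.
  apply: le_trans (chi_le_int muc' c'b) _.
  apply: le_trans (RI_sub (ltW c'c)) _.
  apply: le_trans Hc _; apply: rp_anti (ltW c'c).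
  by apply: le_trans (ltW muc'); apply: le_trans a_ge0 a_le_mu.
rewrite leNgt; apply/negP => H.
have cbm := cbb_ge_mu.
have [z Ez] : exists z, cbarbar P X rp = z%:E.
  move: H cbm; case: (cbarbar P X rp) => [z| |] H1 H2; first by exists z.
    by move: H1; rewrite ltNge leey.
  by move: H2; rewrite leNgt ltNyr.
rewrite Ez lte_fin in H; rewrite Ez lee_fin in cbm.
have : (((z + c) / 2)%:E <= cbarbar P X rp)%E.
  apply: ereal_sup_ubound; exists ((z + c) / 2) => //.
  apply: Gin; lra.
rewrite Ez lee_fin; lra.
Qed.

Section LogCase.
Hypothesis Hlog : forall x : R, 0 <= x -> r x = ln (1 + x) / 2.

Lemma rp_log x : 0 <= x -> rp x = (1 + x)^-1 / 2.
Proof.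
move=> x0.
have x1 : 0 < 1 + x by rewrite ltr_pwDl.
have [dl dv] := is_derive1_ln x1.
have g : (fun h => h^-1 *: ((@ln R \o shift (1 + x)) (h *: 1) - ln (1 + x))) @ (0:R)^' --> (1 + x)^-1.
  by rewrite -dv; exact: dl.
have g2 := cvgM g (cvg_cst (2^-1 : R)).
have g3 : (fun h => (h^-1 *: ((@ln R \o shift (1 + x)) (h *: 1) - ln (1 + x))) * 2^-1)
   @ (0:R)^'+ --> (1 + x)^-1 / 2.
  by apply: dnbhs_right; exact: g2.
have g' : (fun h => h^-1 * (r (h + x) - r x)) @ (0:R)^'+ --> (1 + x)^-1 / 2.
  apply: (cvg_trans _ g3).
  apply: near_eq_cvg; near=> h.
  have h0 : 0 < h by near: h; exact: nbhs_right_gt.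
  rewrite /= Hlog ?Hlog //; last by rewrite addr_ge0 // ltW.
  rewrite /shift /= scaler1.
  have -> : 1 + (h + x) = h + (1 + x) by ring.
  by rewrite /GRing.scale /=; ring.
exact: (cvg_unique _ (rder_right x0) g').
Unshelve. all: by end_near.
Qed.


Lemma inv_convex (u v t : R) : 0 < u -> 0 < v -> 0 <= t <= 1 ->
  (t * u + (1 - t) * v)^-1 <= t * u^-1 + (1 - t) * v^-1.
Proof.
move=> u0 v0 /andP[t0 t1].
have w0 : 0 < t * u + (1 - t) * v.
  have [->|tp] := eqVneq t 0; first by rewrite mul0r add0r subr0 mul1r.
  have tp' : 0 < t by rewrite lt_neqAle eq_sym tp t0.
  by apply: ltr_pwDl; [exact: mulr_gt0|apply: mulr_ge0; lra].
have -> : t * u^-1 + (1 - t) * v^-1 = (t * v + (1 - t) * u) / (u * v).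
  by field; rewrite ?gt_eqF.
rewrite ler_pdivlMr ?mulr_gt0 // ler_pdivrMl //.
have h1 : 0 <= t * (1 - t) by apply: mulr_ge0; lra.
have h2 : 0 <= t * (1 - t) * (u - v) ^+ 2 by apply: mulr_ge0 => //; exact: sqr_ge0.
nra.
Qed.

Lemma rp_convex c : convex_on rp a c.
Proof.
move=> x y t /andP[ax _] /andP[ay _] t01.
have x0 : 0 <= x := le_trans a_ge0 ax.
have y0 : 0 <= y := le_trans a_ge0 ay.
have /andP[t0 t1] := t01.
have z0 : 0 <= t * x + (1 - t) * y by apply: addr_ge0; apply: mulr_ge0 => //; lra.
rewrite !rp_log //.
have := @inv_convex (1 + x) (1 + y) t ltac:(lra) ltac:(lra) t01.
have -> : t * (1 + x) + (1 - t) * (1 + y) = 1 + (t * x + (1 - t) * y) by ring.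
move=> H.
have -> : t * ((1 + x)^-1 / 2) + (1 - t) * ((1 + y)^-1 / 2) = (t * (1 + x)^-1 + (1 - t) * (1 + y)^-1) / 2 by ring.
by rewrite ler_pM2r // invr_gt0.
Qed.

Lemma env_log c y : a <= y <= c -> lconv_env rp a c y = rp y.
Proof.
move=> Hy; apply/eqP; rewrite eq_le env_le //=.
apply: (ub_le_sup (E := [set g y | g in minor c])).
  by exists (rp y); exact: env_ub.
by exists rp => //; split; [exact: rp_convex|].
Qed.

Lemma Dpos c rh : a < c -> mu < c -> (c - mu) / (c - a) < rh -> 0 < rh * (1 + c) - (c - mu).
Proof.
move=> ac muc H.
have ca : 0 < c - a by rewrite subr_gt0.
move: H; rewrite ltr_pdivrMr // => H.
have r0 : 0 < rh.
  by rewrite -(pmulr_lgt0 _ ca); apply: lt_trans H; rewrite subr_gt0.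
have a0 := a_ge0; nra.
Qed.

Lemma elem_log c rh : mu < c -> (c - mu) / (c - a) < rh -> rh < 1 ->
  rh * lconv_env rp a c (xi_bar mu c rh) = rh ^+ 2 / (2 * (rh * (1 + c) - (c - mu))).
Proof.
move=> muc H1 H2.
have ac : a < c := le_lt_trans a_le_mu muc.
have [r0 /andP[axi xic]] := xi_range ac muc H1 H2.
have D0 := Dpos ac muc H1.
rewrite env_log; last by rewrite !ltW.
have xi0 : 0 <= xi_bar mu c rh by apply: le_trans a_ge0 (ltW axi).
rewrite rp_log // (xi_eq r0 muc).
have x1 : 0 < 1 + (mu - (1 - rh) * c) / rh.
  by rewrite -(xi_eq r0 muc) (lt_le_trans ltr01) // lerDl.
set xi := (mu - (1 - rh) * c) / rh in x1 *.
have hD : rh * (1 + c) - (c - mu) = rh * (1 + xi).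
  by rewrite /xi; field; rewrite gt_eqF.
rewrite hD; field.
by rewrite !gt_eqF.
Qed.

Lemma chi_log c : mu < c ->
  chi_lower P X rp c = inf [set rh ^+ 2 / (2 * (rh * (1 + c) - (c - mu))) |
      rh in [set rh | (c - mu) / (c - a) < rh < 1]].
Proof.
move=> muc; rewrite /chi_lower /=; case: ifP => [H|_]; first by move: H; rewrite leNgt muc.
congr inf; apply: eq_imagel => rh /andP[H1 H2]; exact: elem_log.
Qed.

Lemma G_suff c rh : mu < c -> (c%:E < b)%E -> (c - mu) / (c - a) < rh -> rh < 1 ->
  rh ^+ 2 * (1 + c) <= rh * (1 + c) - (c - mu) -> Gset c.
Proof.
move=> muc cb H1 H2 HQ.
have ac : a < c := le_lt_trans a_le_mu muc.
have c0 : 0 <= c := le_trans a_ge0 (ltW ac).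
split => //; split => //.
rewrite chi_log // rp_log //.
apply: (@le_trans _ _ (rh ^+ 2 / (2 * (rh * (1 + c) - (c - mu))))).
  apply: ge_inf; last by exists rh => //; apply/andP; split.
  exists 0 => _ [r' /andP[H3 H4] <-].
  apply: divr_ge0; first exact: sqr_ge0.
  by apply: mulr_ge0 => //; apply: ltW; exact: Dpos.
have D0 := Dpos ac muc H1.
have c1 : 0 < 1 + c by lra.
rewrite ler_pdivrMr ?mulr_gt0 //.
have -> : (1 + c)^-1 / 2 * (2 * (rh * (1 + c) - (c - mu))) = (rh * (1 + c) - (c - mu)) / (1 + c).
  by field; rewrite gt_eqF.
by rewrite ler_pdivlMr.
Qed.

Lemma G_nec_w c w : mu < c -> Gset c ->
  (forall rh, (c - mu) / (c - a) < rh -> rh < 1 -> w <= rh ^+ 2 / (2 * (rh * (1 + c) - (c - mu)))) ->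
  w <= rp c.
Proof.
move=> muc [ac [cb Hc]] H.
apply: le_trans Hc; rewrite chi_log //.
apply: lb_le_inf.
  have ca : 0 < c - a by rewrite subr_gt0.
  have L1 : (c - mu) / (c - a) < 1 by rewrite ltr_pdivrMr // mul1r; have := a_lt_mu; lra.
  set r0 := ((c - mu) / (c - a) + 1) / 2.
  exists (r0 ^+ 2 / (2 * (r0 * (1 + c) - (c - mu)))), r0 => //.
  rewrite /r0; apply/andP; split; lra.
by move=> _ [rh /andP[H1 H2] <-]; exact: H.
Qed.

Lemma G_nec2 c : mu < c -> Gset c -> 3 * c <= 4 * mu + 1.
Proof.
move=> muc Gc.
have ac : a < c := le_lt_trans a_le_mu muc.
have c0 : 0 <= c := le_trans a_ge0 (ltW ac).
have c1 : 0 < 1 + c by lra.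
have k0 : 0 < c - mu by rewrite subr_gt0.
have := @G_nec_w c (2 * (c - mu) / (1 + c) ^+ 2) muc Gc.
rewrite rp_log //.
have H : forall rh, (c - mu) / (c - a) < rh -> rh < 1 ->
    2 * (c - mu) / (1 + c) ^+ 2 <= rh ^+ 2 / (2 * (rh * (1 + c) - (c - mu))).
  move=> rh H1 H2.
  have D0 := Dpos ac muc H1.
  rewrite ler_pdivrMr ?mulr_gt0 // mulrAC ler_pdivlMr ?exprn_gt0 //.
  have : 0 <= (rh * (1 + c) - 2 * (c - mu)) ^+ 2 by exact: sqr_ge0.
  nra.
  by apply: mulr_gt0.
move=> /(_ H).
rewrite ler_pdivrMr ?exprn_gt0 //.
have -> : (1 + c)^-1 / 2 * (1 + c) ^+ 2 = (1 + c) / 2 by field; rewrite gt_eqF.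
lra.
Qed.

Lemma G_nec1 c : mu < c -> c <= 2 * a + 1 -> Gset c ->
  c ^+ 2 - (a + mu) * c + (a ^+ 2 + a - mu) <= 0.
Proof.
move=> muc c2a Gc.
have ac : a < c := le_lt_trans a_le_mu muc.
have a0 := a_ge0.
have c0 : 0 <= c := le_trans a0 (ltW ac).
have c1 : 0 < 1 + c by lra.
have a1 : 0 < 1 + a by lra.
have ca : 0 < c - a by rewrite subr_gt0.
have k0 : 0 < c - mu by rewrite subr_gt0.
have := @G_nec_w c ((c - mu) / (2 * ((c - a) * (1 + a)))) muc Gc.
rewrite rp_log //.
have H : forall rh, (c - mu) / (c - a) < rh -> rh < 1 ->
    (c - mu) / (2 * ((c - a) * (1 + a))) <= rh ^+ 2 / (2 * (rh * (1 + c) - (c - mu))).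
  move=> rh H1 H2.
  have D0 := Dpos ac muc H1.
  move: H1; rewrite ltr_pdivrMr // => H1.
  have r0 : 0 < rh.
    by rewrite -(pmulr_lgt0 _ ca); apply: lt_trans H1.
  rewrite ler_pdivrMr ?mulr_gt0 // mulrAC ler_pdivlMr ?mulr_gt0 //.
  have h1 : 0 <= rh * (c - a) - (c - mu) by lra.
  have h2 : 0 <= rh * (1 + a) - (c - mu).
    have : rh * (1 + a) >= rh * (c - a) by apply: ler_wpM2l; lra.
    lra.
  have h3 := mulr_ge0 h1 h2.
  nra.
move=> /(_ H).
rewrite ler_pdivrMr ?mulr_gt0 //.
have -> : (1 + c)^-1 / 2 * (2 * ((c - a) * (1 + a))) = (c - a) * (1 + a) / (1 + c).
  by field; rewrite gt_eqF.
rewrite ler_pdivlMr //.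
nra.
Qed.

Lemma G_suff1 c : mu < c -> (c%:E < b)%E ->
  c ^+ 2 - (a + mu) * c + (a ^+ 2 + a - mu) < 0 -> Gset c.
Proof.
move=> muc cb Hq.
have ac : a < c := le_lt_trans a_le_mu muc.
have a0 := a_ge0.
have amu := a_lt_mu.
have c0 : 0 <= c := le_trans a0 (ltW ac).
have c1 : 0 < 1 + c by lra.
have ca : 0 < c - a by rewrite subr_gt0.
have k0 : 0 < c - mu by rewrite subr_gt0.
set L := (c - mu) / (c - a).
have L0 : 0 < L by rewrite divr_gt0.
have L1 : L < 1 by rewrite ltr_pdivrMr // mul1r; lra.
set QL := L ^+ 2 * (1 + c) - L * (1 + c) + (c - mu).
have eQ : QL * (c - a) ^+ 2 = (c - mu) * (c ^+ 2 - (a + mu) * c + (a ^+ 2 + a - mu)).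
  by rewrite /QL /L; field; rewrite gt_eqF.
have QL0 : QL < 0.
  rewrite ltNge; apply/negP => H.
  have : 0 <= QL * (c - a) ^+ 2 by apply: mulr_ge0 => //; exact: sqr_ge0.
  rewrite eQ; have := mulr_gt0 k0 (_ : 0 < - (c ^+ 2 - (a + mu) * c + (a ^+ 2 + a - mu))).
  move=> HH; have := HH ltac:(lra); lra.
set dl := Num.min (- QL / (2 * (1 + c))) ((1 - L) / 2).
have dl1 : dl <= - QL / (2 * (1 + c)) by rewrite ge_min lexx.
have dl2 : dl <= (1 - L) / 2 by rewrite ge_min lexx orbT.
have dl0 : 0 < dl.
  rewrite lt_min; apply/andP; split; apply: divr_gt0; lra.
have dlc : dl * (1 + c) <= - QL / 2.
  move: dl1; rewrite ler_pdivlMr ?mulr_gt0 // => H; lra.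
apply: (@G_suff c (L + dl)) => //.
- by rewrite ltrDl.
- lra.
have h1 : 2 * L + dl - 1 <= 1 by lra.
have h2 : dl * (1 + c) * (2 * L + dl - 1) <= dl * (1 + c).
  rewrite -[X in _ <= X]mulr1; apply: ler_wpM2l => //.
  by apply: mulr_ge0; lra.
have eQ2 : (L + dl) ^+ 2 * (1 + c) - ((L + dl) * (1 + c) - (c - mu)) =
   QL + dl * (1 + c) * (2 * L + dl - 1) by rewrite /QL; ring.
have : QL + dl * (1 + c) * (2 * L + dl - 1) <= 0 by lra.
rewrite -eQ2; lra.
Qed.

Lemma G_suff2 c : mu < c -> (c%:E < b)%E -> 2 * a + 1 < c -> 3 * c <= 4 * mu + 1 -> Gset c.
Proof.
move=> muc cb c2a c3.
have ac : a < c := le_lt_trans a_le_mu muc.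
have a0 := a_ge0.
have c0 : 0 <= c := le_trans a0 (ltW ac).
have c1 : 0 < 1 + c by lra.
have ca : 0 < c - a by rewrite subr_gt0.
have k0 : 0 < c - mu by rewrite subr_gt0.
apply: (@G_suff c (2 * (c - mu) / (1 + c))) => //.
- rewrite ltr_pdivrMr // mulrAC ltr_pdivlMr //; nra.
- rewrite ltr_pdivrMr // mul1r; lra.
- have -> : (2 * (c - mu) / (1 + c)) ^+ 2 * (1 + c) = 4 * (c - mu) ^+ 2 / (1 + c).
    by field; rewrite gt_eqF.
  have -> : 2 * (c - mu) / (1 + c) * (1 + c) - (c - mu) = c - mu.
    by field; rewrite gt_eqF.
  rewrite ler_pdivrMr //; nra.
Qed.

Lemma cbb_eq t : mu < t -> (forall c, mu < c -> (c%:E < b)%E -> c < t -> Gset c) ->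
  (forall c, mu < c -> Gset c -> c <= t) -> cbarbar P X rp = Order.min t%:E b.
Proof.
move=> mut K2 K3.
apply/eqP; rewrite eq_le; apply/andP; split.
  apply: ge_ereal_sup => _ [c Gc <-].
  have hmin : forall x : \bar R, (x <= t%:E)%E -> (x <= b)%E -> (x <= Order.min t%:E b)%E.
    by move=> x h1 h2; rewrite /Order.min; case: ifP.
  apply: hmin.
    rewrite lee_fin; have [cmu|muc] := leP c mu; first exact: le_trans cmu (ltW mut).
    exact: K3.
  by have [_ [cb _]] := Gc; exact: ltW.
rewrite leNgt; apply/negP => H.
have cbm := cbb_ge_mu.
have hm : (Order.min t%:E b <= t%:E)%E /\ (Order.min t%:E b <= b)%E.
  rewrite /Order.min; case: ifP => h; split => //; first exact: ltW.
  by rewrite leNgt h.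
have [z Ez] : exists z, cbarbar P X rp = z%:E.
  move: H cbm; case: (cbarbar P X rp) => [z| |] H1 H2; first by exists z.
    by have := lt_le_trans H1 hm.1; rewrite ltNge leey.
  by move: H2; rewrite leNgt ltNyr.
rewrite Ez in H; rewrite Ez lee_fin in cbm.
have zt : z < t by rewrite -lte_fin; exact: lt_le_trans H hm.1.
have zb : (z%:E < b)%E by exact: lt_le_trans H hm.2.
have [c' [zc' [c't c'b]]] : exists c', z < c' /\ c' < t /\ (c'%:E < b)%E.
  have [Hb|[y [Hb _]]] := b_cases.
    by exists ((z + t) / 2); rewrite Hb ltry; split; [lra|split; [lra|]].
  move: zb; rewrite Hb lte_fin => zy.
  exists ((z + Num.min t y) / 2).
  have m1 : Num.min t y <= t by rewrite ge_min lexx.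
  have m2 : Num.min t y <= y by rewrite ge_min lexx orbT.
  have m3 : z < Num.min t y by rewrite lt_min zt zy.
  rewrite lte_fin; split; [lra|split; lra].
have : (c'%:E <= cbarbar P X rp)%E.
  by apply: ereal_sup_ubound; exists c' => //; apply: K2 => //; lra.
rewrite Ez lee_fin; lra.
Qed.

Lemma part2 :
  let c1 := (mu + a + Num.sqrt ((mu + a) ^+ 2 - 4 * (a ^+ 2 + a - mu))) / 2 in
  let c2 := 4 / 3 * mu + 1 / 3 in
  cbarbar P X rp =
     (if mu <= 3 / 2 * a + 1 / 2 then Order.min c1%:E (xup P X)
      else Order.min c2%:E (xup P X)).
Proof.
move=> c1 c2.
have a0 := a_ge0.
have amu := a_lt_mu.
case: ifP => Hbr.
- set Dd := (mu + a) ^+ 2 - 4 * (a ^+ 2 + a - mu).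
  have eD : Dd = (mu - a) * (mu + 3 * a + 4) by rewrite /Dd; ring.
  have D0 : 0 < Dd by rewrite eD; apply: mulr_gt0; lra.
  set sq := Num.sqrt Dd.
  have sq0 : 0 <= sq := sqrtr_ge0 _.
  have sq2 : sq ^+ 2 = Dd by rewrite /sq sqr_sqrtr // ltW.
  have ec1 : c1 = (mu + a + sq) / 2 by [].
  apply: cbb_eq.
  + rewrite ec1; have : mu - a < sq.
      rewrite ltNge; apply/negP => H.
      have : sq ^+ 2 <= (mu - a) ^+ 2 by rewrite ler_sqr // ?nnegrE // subr_ge0 ltW.
      rewrite sq2 eD; nra.
    lra.
  + move=> c muc cb cc1; apply: G_suff1 => //.
    have h1 : 0 <= 2 * c - (mu + a) by lra.
    have h2 : 2 * c - (mu + a) < sq by move: cc1; rewrite ec1; lra.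
    have : (2 * c - (mu + a)) ^+ 2 < sq ^+ 2 by rewrite ltr_sqr // ?nnegrE // (le_trans h1) // ltW.
    rewrite sq2 /Dd; nra.
  + move=> c muc Gc.
    have [c2a|c2a] := leP c (2 * a + 1).
      have Hq := G_nec1 muc c2a Gc.
      rewrite leNgt; apply/negP => H.
      have h2 : sq < 2 * c - (mu + a) by move: H; rewrite ec1; lra.
      have : sq ^+ 2 < (2 * c - (mu + a)) ^+ 2 by rewrite ltr_sqr // ?nnegrE // (le_trans sq0) // ltW.
      rewrite sq2 /Dd; nra.
    have := G_nec2 muc Gc; move: Hbr; lra.
- have Hbr' : 3 / 2 * a + 1 / 2 < mu by rewrite ltNge Hbr.
  apply: cbb_eq.
  + rewrite /c2; lra.
  + move=> c muc cb cc2.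
    have [c2a|c2a] := leP c (2 * a + 1).
      apply: G_suff1 => //.
      have e : c ^+ 2 - (a + mu) * c + (a ^+ 2 + a - mu) =
        (c - mu) * (c - (2 * a + 1)) + (a + 1) * (c + a - 2 * mu) by ring.
      rewrite e.
      have h1 : (c - mu) * (c - (2 * a + 1)) <= 0 by rewrite mulr_ge0_le0 //; lra.
      have h2 : (a + 1) * (c + a - 2 * mu) < 0 by rewrite pmulr_rlt0; lra.
      lra.
    apply: G_suff2 => //; move: cc2; rewrite /c2; lra.
  + move=> c muc Gc; have := G_nec2 muc Gc; rewrite /c2; lra.
Qed.
End LogCase.
End PR.

Theorem proposition5 (R : realType) (d : measure_display) (T : measurableType d)
  (P : probability T R) (X : T -> R) (r rp : R -> R) :
  measurable_fun setT X ->
  (forall t, 0 <= X t) ->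
  P.-integrable setT (EFin \o X) ->
  (forall x : R, 0 <= x -> 0 <= r x) ->
  (forall x y : R, 0 <= x -> x <= y -> r x <= r y) ->
  (forall x y t : R, 0 <= x -> 0 <= y -> 0 <= t <= 1 ->
     t * r x + (1 - t) * r y <= r (t * x + (1 - t) * y)) ->
  (forall x : R, 0 < x -> is_derive x 1 r (rp x)) ->
  ((h : R)^-1 * (r h - r 0)) @[h --> (0:R)^'+] --> rp 0 ->
  {within [set x : R | 0 <= x], continuous rp} ->
  rp_ext rp (xup P X) < rp (xlow P X) ->
  (forall c : R, 0 <= c ->
     (\int[P]_(t in [set t | (X t < c)%R]) (rp (X t))%:E <= (rp c)%:E)%E ->
     (c%:E <= cbarbar P X rp)%E)
  /\
  ((forall x : R, 0 <= x -> r x = ln (1 + x) / 2) ->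
   let mu := meanX P X in
   let a := xlow P X in
   let c1 := (mu + a + Num.sqrt ((mu + a) ^+ 2 - 4 * (a ^+ 2 + a - mu))) / 2 in
   let c2 := 4 / 3 * mu + 1 / 3 in
   cbarbar P X rp =
     (if mu <= 3 / 2 * a + 1 / 2 then Order.min c1%:E (xup P X)
      else Order.min c2%:E (xup P X))).
Proof.
move=> HmX HX0 HiX Hr0 Hrinc Hrconc Hder Hder0 Hcont Hstrict.
split.
  move=> c c0 Hc; apply: part1 => //.
move=> Hlog; apply: part2 => //.
Qed.
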